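(* Let $|\psi\rangle$ be a pure three-qubit state. Suppose that the inequality $\mathcal C_{ik}^2+\mathcal C_{jk}^2\ge\frac89$ holds for at least two of the three choices of $\{i,j,k\}=\{A,B,C\}$ (i.e. for at least two choices of the index $k$). Then steering correlations obey monogamy: at most one of $S_{AB},S_{AC},S_{BC}$ exceeds $1$.
   Context: For a two-qubit state $\rho$ let $t_{kl}=\mathrm{Tr}[\rho\,\sigma_k\otimes\sigma_l]$ ($\sigma_k$ Pauli matrices) and $S(\rho)=\sum_{k,l=1}^3 t_{kl}^2$; $\rho_{ij}$ is the reduced state of qubits $i,j$ and $S_{ij}=S(\rho_{ij})$. $S_{ij}>1$ is equivalent to $\rho_{ij}$ violating the three-settings CJWR linear steering inequality. $\mathcal C_{ij}$ is the Wootters concurrence of $\rho_{ij}$: $\mathcal C(\rho)=\max\{0,\lambda_1-\lambda_2-\lambda_3-\lambda_4\}$, with $\lambda_1\ge\dots\ge\lambda_4$ the square roots of the eigenvalues of $\rho(\sigma_2\otimes\sigma_2)\rho^*(\sigma_2\otimes\sigma_2)$. Monogamy of steering means that at most one of the three reduced states violates the inequality. *)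

(* Defs.v *)
(* Complex numbers are R[i] (mathcomp-real-closed) for
   R : realType (a model of the real numbers); all definitions below are
   stated for an arbitrary numClosedFieldType C and instantiated at R[i]. *)
From mathcomp Require Import all_boot all_order all_algebra.
From mathcomp Require Import reals.
From mathcomp.real_closed Require Import complex mxtens.
Set Implicit Arguments. Unset Strict Implicit. Unset Printing Implicit Defensive.
Import Order.TTheory GRing.Theory Num.Theory.
Local Open Scope ring_scope.

Section QuantumDefs.
Variable C : numClosedFieldType.

Definition sigma1 : 'M[C]_2 := \matrix_(i < 2, j < 2) (if i == j then 0 else 1).
Definition sigma2 : 'M[C]_2 :=
  \matrix_(i < 2, j < 2)
    (if i == j then 0 else if (i : nat) == 0%N then - 'i else 'i).
Definition sigma3 : 'M[C]_2 :=
  \matrix_(i < 2, j < 2)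
    (if i == j then (if (i : nat) == 0%N then 1 else -1) else 0).
Definition pauli (k : 'I_3) : 'M[C]_2 :=
  if (k : nat) == 0%N then sigma1 else if (k : nat) == 1%N then sigma2 else sigma3.

(* Two-qubit operators: 'M_(2*2), index (a,b) <-> 2a+b (mxtens convention,
   so that (A *t B) is the Kronecker product A (x) B). *)

(* t_kl = Tr[rho sigma_k (x) sigma_l],  k,l = 1..3 (here indices 0..2). *)
Definition tcorr (rho : 'M[C]_(2 * 2)) (k l : 'I_3) : C :=
  \tr (rho *m (pauli k *t pauli l)).
Definition Sval (rho : 'M[C]_(2 * 2)) : C :=
  \sum_(k < 3) \sum_(l < 3) tcorr rho k l ^+ 2.

Definition conjmx (A : 'M[C]_(2 * 2)) : 'M[C]_(2 * 2) := map_mx Num.conj A.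
Definition wootR (rho : 'M[C]_(2 * 2)) : 'M[C]_(2 * 2) :=
  rho *m (sigma2 *t sigma2) *m conjmx rho *m (sigma2 *t sigma2).
Definition eigvals (A : 'M[C]_(2 * 2)) : seq C :=
  sval (closed_field_poly_normal (char_poly A)).
Definition wootlambda (rho : 'M[C]_(2 * 2)) : seq C :=
  sort (fun x y : C => y <= x) (map sqrtC (eigvals (wootR rho))).
Definition concurrence (rho : 'M[C]_(2 * 2)) : C :=
  let l := wootlambda rho in Num.max 0 (l`_0 - l`_1 - l`_2 - l`_3).

(* Three-qubit pure states: amplitudes psi a b c = <abc|psi>. *)
Definition normalized (psi : 'I_2 -> 'I_2 -> 'I_2 -> C) : Prop :=
  \sum_(a < 2) \sum_(b < 2) \sum_(c < 2) `|psi a b c| ^+ 2 = 1.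

Definition idx1 (i : 'I_(2 * 2)) : 'I_2 := (mxtens_unindex i).1.
Definition idx2 (i : 'I_(2 * 2)) : 'I_2 := (mxtens_unindex i).2.

Definition rhoAB (psi : 'I_2 -> 'I_2 -> 'I_2 -> C) : 'M[C]_(2 * 2) :=
  \matrix_(i, j) \sum_(c < 2)
     psi (idx1 i) (idx2 i) c * Num.conj (psi (idx1 j) (idx2 j) c).
Definition rhoAC (psi : 'I_2 -> 'I_2 -> 'I_2 -> C) : 'M[C]_(2 * 2) :=
  \matrix_(i, j) \sum_(b < 2)
     psi (idx1 i) b (idx2 i) * Num.conj (psi (idx1 j) b (idx2 j)).
Definition rhoBC (psi : 'I_2 -> 'I_2 -> 'I_2 -> C) : 'M[C]_(2 * 2) :=
  \matrix_(i, j) \sum_(a < 2)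
     psi a (idx1 i) (idx2 i) * Num.conj (psi a (idx1 j) (idx2 j)).

End QuantumDefs.

(* Main.v *)
Require Import Defs.
From mathcomp Require Import all_boot all_order all_algebra.
From mathcomp Require Import reals.
From mathcomp Require Import ring lra.
From mathcomp.real_closed Require Import complex mxtens.
Set Implicit Arguments. Unset Strict Implicit. Unset Printing Implicit Defensive.
Import Order.TTheory GRing.Theory Num.Theory.
Local Open Scope ring_scope.

Lemma sylvester_char (R : comNzRingType) m n (A : 'M[R]_(m, n)) (B : 'M[R]_(n, m)) :
  'X^n * char_poly (A *m B) = 'X^m * char_poly (B *m A).
Proof.
pose A' := map_mx polyC A; pose B' := map_mx polyC B.
pose M := block_mx ('X%:M : 'M[{poly R}]_m) A' B' 1%:M.
pose L1 := block_mx (1%:M : 'M[{poly R}]_m) (- A') 0 ('X%:M).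
pose L2 := block_mx (1%:M : 'M[{poly R}]_m) 0 (- B') ('X%:M).
have h1 : L1 *m M = block_mx (char_poly_mx (A *m B)) 0 ('X *: B') ('X%:M).
  rewrite /L1 /M mulmx_block mul1mx mul0mx mul1mx add0r mulNmx mulmx1.
  rewrite mul0mx add0r subrr mul_scalar_mx mulmx1.
  by rewrite /char_poly_mx map_mxM.
have h2 : L2 *m M = block_mx ('X%:M) A' 0 (char_poly_mx (B *m A)).
  rewrite /L2 /M mulmx_block !mul1mx !mul0mx !addr0 !mulNmx mulmx1.
  rewrite mul_scalar_mx scalar_mxC mul_scalar_mx addrC subrr addrC.
  by rewrite /char_poly_mx map_mxM.
have := congr1 determinant h1; have := congr1 determinant h2.
rewrite !det_mulmx /L1 /L2 det_lblock det_ublock det_lblock det_ublock.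
rewrite !det_scalar expr1n !mul1r /char_poly.
by move=> <- ->; rewrite mulrC.
Qed.

Lemma char_poly2 (R : comNzRingType) (A : 'M[R]_2) :
  char_poly A = 'X^2 - (\tr A) *: 'X + (\det A)%:P.
Proof.
apply/polyP => i.
have hs := size_char_poly A.
rewrite !coefD !coefN coefZ !coefXn coefX coefC.
case: i => [|[|[|i]]] /=.
- by rewrite char_poly_det expr2 mulN1r opprK mul1r mulr0 subr0 add0r.
- by rewrite (char_poly_trace A) // mulr1 add0r addr0.
- by have /monicP := char_poly_monic A; rewrite /lead_coef hs /= => ->; rewrite mulr0 subr0 addr0.
- rewrite mulr0 subr0 addr0; apply: nth_default; by rewrite hs.
Qed.

Lemma det2 (R : comNzRingType) (A : 'M[R]_2) :
  \det A = A ord0 ord0 * A ord_max ord_max - A ord0 ord_max * A ord_max ord0.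
Proof.
rewrite (expand_det_row _ ord0) !big_ord_recl big_ord0 addr0.
rewrite /cofactor !det_mx11 /= !mxE /=.
have -> : (lift ord0 ord0 : 'I_2) = ord_max by apply: val_inj.
rewrite !expr0 !expr1 !mul1r mulN1r mulrN.
by congr (_ * _ - _ * _); rewrite /bump /=; congr (A _ _); apply: val_inj.
Qed.

Lemma sum2 (R : nmodType) (F : 'I_2 -> R) : \sum_(i < 2) F i = F ord0 + F ord_max.
Proof.
rewrite !big_ord_recl big_ord0 addr0; congr (_ + F _); exact: val_inj.
Qed.
Section Conc.
Variable C : numClosedFieldType.
Local Notation cj := (@Num.conj_op C).

Definition Ym : 'M[C]_(2*2) := sigma2 C *t sigma2 C.
Definition Gm (U : 'M[C]_(2*2,2)) : 'M[C]_2 := U^T *m Ym *m U.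
Definition rhoU (U : 'M[C]_(2*2,2)) : 'M[C]_(2*2) := U *m (map_mx Num.conj U)^T.

Lemma sigma2_conj : map_mx Num.conj (sigma2 C) = - sigma2 C.
Proof.
apply/matrixP => i j; rewrite !mxE.
case: (i == j); first by rewrite conjC0 oppr0.
by case: ((i : nat) == 0%N); rewrite ?rmorphN /= conjCi ?opprK.
Qed.

Lemma sigma2_tr : (sigma2 C)^T = - sigma2 C.
Proof.
apply/matrixP => i j; rewrite !mxE.
by case: i => [[|[|i]] Hi] //; case: j => [[|[|j]] Hj] //=; rewrite ?oppr0 ?opprK.
Qed.

Lemma tensNN m n p q (A : 'M[C]_(m,n)) (B : 'M[C]_(p,q)) : (- A) *t (- B) = A *t B.
Proof. by apply/matrixP => i j; rewrite !mxE mulrNN. Qed.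

Lemma Ym_conj : map_mx Num.conj Ym = Ym.
Proof. by rewrite /Ym map_mxT sigma2_conj tensNN. Qed.

Lemma Ym_tr : Ym^T = Ym.
Proof. by rewrite /Ym trmx_tens sigma2_tr tensNN. Qed.

Lemma map_conjK m n (A : 'M[C]_(m,n)) : map_mx Num.conj (map_mx Num.conj A) = A.
Proof. by apply/matrixP => i j; rewrite !mxE conjCK. Qed.

Lemma Gm_sym U : (Gm U)^T = Gm U.
Proof. by rewrite /Gm !trmx_mul trmxK Ym_tr mulmxA. Qed.

Lemma wootR_rhoU U :
  wootR (rhoU U) = U *m ((map_mx Num.conj U)^T *m Ym *m map_mx Num.conj U *m U^T *m Ym).
Proof.
rewrite /wootR /rhoU /Defs.conjmx map_mxM map_trmx map_conjK -/Ym.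
by rewrite !mulmxA.
Qed.

Lemma WU U : (map_mx Num.conj U)^T *m Ym *m map_mx Num.conj U *m U^T *m Ym *m U
   = map_mx Num.conj (Gm U) *m Gm U.
Proof.
by rewrite /Gm !map_mxM map_trmx Ym_conj !mulmxA.
Qed.

Lemma char_wootR U :
  char_poly (wootR (rhoU U)) = 'X^2 * char_poly (map_mx Num.conj (Gm U) *m Gm U).
Proof.
have h := @sylvester_char _ _ _ U ((map_mx Num.conj U)^T *m Ym *m map_mx Num.conj U *m U^T *m Ym).
rewrite -wootR_rhoU WU in h.
apply: (@mulfI _ ('X^2)); first by rewrite expf_neq0 // polyX_eq0.
by rewrite h mulrA -exprD.
Qed.


Lemma amgm2 (a b : C) : a \is Num.real -> b \is Num.real -> 2 * a * b <= a ^+ 2 + b ^+ 2.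
Proof.
move=> ha hb; have h := exprn_ge0 2 (normr_ge0 (a - b)).
rewrite real_normK ?realB // sqrrB in h; rewrite -subr_ge0.
by have -> : a ^+ 2 + b ^+ 2 - 2 * a * b = a ^+ 2 - (a * b) *+ 2 + b ^+ 2 by rewrite mulr2n; ring.
Qed.

Definition tG (G : 'M[C]_2) : C :=
  `|G ord0 ord0| ^+ 2 + `|G ord_max ord_max| ^+ 2 + 2 * `|G ord0 ord_max| ^+ 2.

Lemma tG_ge (G : 'M[C]_2) : G ord_max ord0 = G ord0 ord_max -> 2 * `|\det G| <= tG G.
Proof.
move=> Gs; rewrite det2 Gs /tG.
apply: (le_trans (y := 2 * (`|G ord0 ord0| * `|G ord_max ord_max| + `|G ord0 ord_max| ^+ 2))).
  rewrite ler_pM2l ?ltr0n // (le_trans (ler_normB _ _)) // normrM -expr2 normrX //.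
rewrite mulrDr lerD2r mulrA; exact: amgm2 (normr_real _) (normr_real _).
Qed.

Lemma tG_ge0 (G : 'M[C]_2) : 0 <= tG G.
Proof. by rewrite /tG !addr_ge0 ?mulr_ge0 ?exprn_ge0 ?ler0n. Qed.


Lemma XsubC_mul (a b : C) :
  ('X - a%:P) * ('X - b%:P) = 'X^2 - (a + b) *: 'X + (a * b)%:P.
Proof. by rewrite polyCM -!mul_polyC polyCD; ring. Qed.

Lemma tr_conj_mul (M : 'M[C]_2) : M ord_max ord0 = M ord0 ord_max ->
  \tr (map_mx Num.conj M *m M) = tG M.
Proof.
move=> Ms; rewrite /mxtrace sum2 !mxE !sum2 !mxE Ms /tG !normCKC; ring.
Qed.

Lemma conc_rhoU U :
  concurrence (rhoU U) ^+ 2 = tG (Gm U) - 2 * `|\det (Gm U)|.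
Proof.
pose G := Gm U.
have Gs : G ord_max ord0 = G ord0 ord_max.
  by rewrite /G -[in LHS](Gm_sym U) mxE.
pose t := tG G; pose d := `|\det G| ^+ 2.
have ht : \tr (map_mx Num.conj G *m G) = t.
  exact: tr_conj_mul.
have hd : \det (map_mx Num.conj G *m G) = d.
  by rewrite det_mulmx det_map_mx /= /d normCKC.
have t2 : 2 * `|\det G| <= t by exact: tG_ge.
have t0 : 0 <= t by exact: tG_ge0.
have d0 : 0 <= `|\det G| by [].
have t2sq : 4 * d <= t ^+ 2.
  have -> : 4 * d = (2 * `|\det G|) ^+ 2 by rewrite /d exprMn; congr (_ * _); rewrite expr2 -natrM.
  by rewrite ler_pXn2r // nnegrE ?mulr_ge0 ?ler0n.
pose s := sqrtC (t ^+ 2 - 4 * d).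
have s0 : 0 <= s by rewrite sqrtC_ge0 subr_ge0.
have ss : s ^+ 2 = t ^+ 2 - 4 * d by rewrite sqrtCK.
have st : s <= t.
  rewrite -(ler_pXn2r (n:=2)) // ?nnegrE // ss lerBlDr lerDl mulr_ge0 ?ler0n //.
  exact: exprn_ge0.
pose m1 := (t + s) / 2; pose m2 := (t - s) / 2.
have m12 : m1 + m2 = t by rewrite /m1 /m2; field; rewrite ?pnatr_eq0.
have m1m2 : m1 * m2 = d.
  have -> : m1 * m2 = (t^+2 - s^+2) / 4 by rewrite /m1 /m2; field; rewrite ?pnatr_eq0.
  by rewrite ss; field; rewrite ?pnatr_eq0.
have hchar : char_poly (wootR (rhoU U)) = \prod_(z <- [:: 0; 0; m1; m2]) ('X - z%:P).
  rewrite char_wootR -/G char_poly2 ht hd -m12 -m1m2 -XsubC_mul.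
  by rewrite !big_cons big_nil mulr1 !subr0 expr2 !mulrA.
have perm : perm_eq (eigvals (wootR (rhoU U))) [:: 0; 0; m1; m2].
  rewrite /eigvals; case: closed_field_poly_normal => r /= hr.
  apply: prod_XsubC_eq; rewrite -hchar [in RHS]hr.
  by have /monicP -> := char_poly_monic (wootR (rhoU U)); rewrite scale1r.
have m20 : 0 <= m2 by rewrite /m2 mulr_ge0 ?subr_ge0 ?invr_ge0 ?ler0n.
have m21 : m2 <= m1 by rewrite /m1 /m2 ler_pM2r ?invr_gt0 ?ltr0n // lerD2l (le_trans _ s0) // oppr_le0.
have m10 : 0 <= m1 by exact: le_trans m20 m21.
have sq21 : sqrtC m2 <= sqrtC m1 by rewrite ler_sqrtC ?nnegrE.
have sq20 : 0 <= sqrtC m2 by rewrite sqrtC_ge0.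
pose L := [:: sqrtC m1; sqrtC m2; 0; 0].
have pL : perm_eq L (map sqrtC (eigvals (wootR (rhoU U)))).
  rewrite perm_sym (perm_trans (perm_map sqrtC perm)) //= sqrtC0.
  by rewrite -(perm_rot 2) /=.
have hL : wootlambda (rhoU U) = L.
  rewrite /wootlambda.
  have allL : forall x, x \in L -> 0 <= x.
    by move=> x; rewrite !inE => /or4P [] /eqP ->; rewrite ?sqrtC_ge0.
  pose leT := fun x y : C => y <= x.
  have tot : {in L &, total leT}.
    move=> x y /allL x0 /allL y0; rewrite /leT; exact: real_leVge (ger0_real y0) (ger0_real x0).
  have tr : {in L & &, transitive leT}.
    by move=> x y z _ _ _; rewrite /leT => h1 h2; exact: le_trans h2 h1.
  have asym : {in L &, antisymmetric leT}.
    by move=> x y _ _; rewrite /leT => /andP [h1 h2]; apply/eqP; rewrite eq_le h1 h2.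
  have := elimT (perm_sort_inP (map sqrtC (eigvals (wootR (rhoU U)))) tot tr asym) pL; rewrite -/leT => <-.
  apply: sorted_sort; first by move=> x y z; rewrite /leT => h1 h2; exact: le_trans h2 h1.
  by rewrite /= /leT sq21 sq20 lexx.
rewrite /concurrence hL /= !subr0.
have c0 : 0 <= sqrtC m1 - sqrtC m2 by rewrite subr_ge0.
have -> : Num.max 0 (sqrtC m1 - sqrtC m2) = sqrtC m1 - sqrtC m2.
  by apply/max_idPr.
rewrite sqrrB !sqrtCK -sqrtCM ?nnegrE // m1m2 /d sqrCK // -mulr_natl.
by rewrite -/G -/t -m12; ring.
Qed.


Definition mi (a b : 'I_2) : 'I_(2*2) := mxtens_index (a, b).

Lemma sum_tens (R : nmodType) (F : 'I_(2*2) -> R) :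
  \sum_(i < 2*2) F i = \sum_(a < 2) \sum_(b < 2) F (mi a b).
Proof.
rewrite pair_big /= (reindex (fun p : 'I_2 * 'I_2 => mi p.1 p.2)) //.
exists (@mxtens_unindex 2 2) => [[a b] _|i _]; first by rewrite /mi mxtens_indexK.
by rewrite /mi -surjective_pairing mxtens_unindexK.
Qed.

Definition Em : 'M[C]_2 := \matrix_(i, j) (if i == j then 0 else if (i : nat) == 0%N then -1 else 1).

Lemma sigma2E : sigma2 C = 'i *: Em.
Proof.
apply/matrixP => i j; rewrite !mxE; case: ifP => _; first by rewrite mulr0.
by case: ifP => _; rewrite ?mulrN1 ?mulr1.
Qed.

Lemma YmE a b a' b' : Ym (mi a b) (mi a' b') = - (Em a a' * Em b b').
Proof. by rewrite /Ym /mi tensmxE sigma2E !mxE mulrACA -expr2 sqrCi mulN1r. Qed.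

Lemma Em00 : Em ord0 ord0 = 0. Proof. by rewrite mxE. Qed.
Lemma Em11 : Em ord_max ord_max = 0. Proof. by rewrite mxE. Qed.
Lemma Em01 : Em ord0 ord_max = -1. Proof. by rewrite mxE. Qed.
Lemma Em10 : Em ord_max ord0 = 1. Proof. by rewrite mxE. Qed.
Definition EmE := (Em00, Em11, Em01, Em10).

Definition vY (x y : 'I_2 -> 'I_2 -> C) : C :=
  x ord0 ord_max * y ord_max ord0 + x ord_max ord0 * y ord0 ord_max
  - x ord0 ord0 * y ord_max ord_max - x ord_max ord_max * y ord0 ord0.

Lemma GmE U c c' : Gm U c c' = vY (fun a b => U (mi a b) c) (fun a b => U (mi a b) c').
Proof.
rewrite /Gm mxE sum_tens !sum2 !mxE !sum_tens !sum2 !YmE !EmE !mxE /vY.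
ring.
Qed.


Definition Smx (s0 s1 : C) : 'M[C]_2 :=
  \matrix_(i, j) (if (i : nat) == 0%N then (if (j : nat) == 0%N then s0 else - s1^*)
                  else (if (j : nat) == 0%N then s1 else s0^*)).

Lemma Smx00 s0 s1 : Smx s0 s1 ord0 ord0 = s0. Proof. by rewrite !mxE. Qed.
Lemma Smx01 s0 s1 : Smx s0 s1 ord0 ord_max = - s1^*. Proof. by rewrite !mxE. Qed.
Lemma Smx10 s0 s1 : Smx s0 s1 ord_max ord0 = s1. Proof. by rewrite !mxE. Qed.
Lemma Smx11 s0 s1 : Smx s0 s1 ord_max ord_max = s0^*. Proof. by rewrite !mxE. Qed.
Definition SmxE := (Smx00, Smx01, Smx10, Smx11).

Definition kk (s0 s1 : C) := `|s0| ^+ 2 + `|s1| ^+ 2.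

Lemma conjS s0 s1 : map_mx Num.conj (Smx s0 s1) *m (Smx s0 s1)^T = (kk s0 s1)%:M.
Proof.
apply/matrixP => i j; rewrite !mxE sum2 !mxE.
case: i => [[|[|i]] Hi] //; case: j => [[|[|j]] Hj] //=; rewrite /kk !normCK ?rmorphN /= ?conjCK; ring.
Qed.

Lemma detS s0 s1 : \det (Smx s0 s1) = kk s0 s1.
Proof. by rewrite det2 !SmxE /kk !normCK; ring. Qed.

Lemma tG_congr (G : 'M[C]_2) s0 s1 : G ord_max ord0 = G ord0 ord_max ->
  tG ((Smx s0 s1)^T *m G *m Smx s0 s1) = kk s0 s1 ^+ 2 * tG G.
Proof.
move=> Gs; rewrite /tG !mxE !sum2 !mxE !sum2 !mxE /= Gs /kk !normCK.
rewrite !(rmorphD, rmorphM, rmorphN) /= !conjCK; ring.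
Qed.


Definition Gram (U : 'M[C]_(2*2,2)) : 'M[C]_2 := U^T *m map_mx Num.conj U.

Lemma kk_ge0 s0 s1 : 0 <= kk s0 s1.
Proof. by rewrite /kk addr_ge0 ?exprn_ge0. Qed.

Lemma conj_kk s0 s1 : (kk s0 s1)^* = kk s0 s1.
Proof. by rewrite /kk !normCK !(rmorphD, rmorphM) /= !conjCK; ring. Qed.

Lemma Gm_mul U s0 s1 : Gm (U *m Smx s0 s1) = (Smx s0 s1)^T *m Gm U *m Smx s0 s1.
Proof. by rewrite /Gm trmx_mul !mulmxA. Qed.

Lemma Gram_mul U s0 s1 :
  Gram (U *m Smx s0 s1) = (Smx s0 s1)^T *m Gram U *m map_mx Num.conj (Smx s0 s1).
Proof. by rewrite /Gram trmx_mul map_mxM !mulmxA. Qed.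

Lemma det_Gram_mul U s0 s1 : \det (Gram (U *m Smx s0 s1)) = kk s0 s1 ^+ 2 * \det (Gram U).
Proof.
rewrite Gram_mul !det_mulmx det_tr det_map_mx /= detS conj_kk; ring.
Qed.

Lemma tr_Gram_mul U s0 s1 : \tr (Gram (U *m Smx s0 s1)) = kk s0 s1 * \tr (Gram U).
Proof.
by rewrite Gram_mul mxtrace_mulC mulmxA conjS mul_scalar_mx mxtraceZ.
Qed.

Lemma Gram_herm U : Gram U ord_max ord0 = (Gram U ord0 ord_max)^*.
Proof.
rewrite /Gram !mxE rmorph_sum /=; apply: eq_bigr => i _.
by rewrite !mxE rmorphM /= conjCK mulrC.
Qed.

Lemma Gram_diag U a : Gram U a a = \sum_(i < 2*2) `|U i a| ^+ 2.
Proof. by rewrite /Gram !mxE; apply: eq_bigr => i _; rewrite !mxE normCK. Qed.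

Lemma Gram_diag_ge0 U a : 0 <= Gram U a a.
Proof. by rewrite Gram_diag sumr_ge0 // => i _; rewrite exprn_ge0. Qed.

Lemma det_Gram_le U : \det (Gram U) <= Gram U ord0 ord0 * Gram U ord_max ord_max.
Proof.
rewrite det2 Gram_herm -normCK lerBlDr lerDl; exact: exprn_ge0.
Qed.

Lemma vY_bound (x : 'I_2 -> 'I_2 -> C) :
  `|vY x x| <= `|x ord0 ord0| ^+ 2 + `|x ord0 ord_max| ^+ 2
             + `|x ord_max ord0| ^+ 2 + `|x ord_max ord_max| ^+ 2.
Proof.
have -> : vY x x = 2 * (x ord0 ord_max * x ord_max ord0) - 2 * (x ord0 ord0 * x ord_max ord_max).
  by rewrite /vY; ring.
apply: le_trans (ler_normB _ _) _; rewrite !normrM ger0_norm ?ler0n //.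
have h1 := @amgm2 _ _ (normr_real (x ord0 ord_max)) (normr_real (x ord_max ord0)).
have h2 := @amgm2 _ _ (normr_real (x ord0 ord0)) (normr_real (x ord_max ord_max)).
rewrite !mulrA; apply: le_trans (lerD h1 h2) _.
by rewrite le_eqVlt; apply/orP; left; apply/eqP; ring.
Qed.

Lemma Gram_diag_mi U a : Gram U a a =
  `|U (mi ord0 ord0) a| ^+ 2 + `|U (mi ord0 ord_max) a| ^+ 2
  + `|U (mi ord_max ord0) a| ^+ 2 + `|U (mi ord_max ord_max) a| ^+ 2.
Proof. by rewrite Gram_diag sum_tens !sum2 !addrA. Qed.

Lemma Gm_vY_bound U : `|Gm U ord_max ord_max| <= Gram U ord_max ord_max.
Proof. by rewrite GmE Gram_diag_mi; exact: vY_bound. Qed.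

Lemma exists_iso (G : 'M[C]_2) : G ord_max ord0 = G ord0 ord_max ->
  exists s0 s1, kk s0 s1 != 0 /\ ((Smx s0 s1)^T *m G *m Smx s0 s1) ord0 ord0 = 0.
Proof.
move=> Gs.
have E s0 s1 : ((Smx s0 s1)^T *m G *m Smx s0 s1) ord0 ord0
   = G ord0 ord0 * s0 ^+ 2 + 2 * G ord0 ord_max * s0 * s1 + G ord_max ord_max * s1 ^+ 2.
  by rewrite !mxE !sum2 !mxE !sum2 !mxE /= Gs; ring.
have [g0|g0] := eqVneq (G ord0 ord0) 0.
  exists 1, 0; split; first by rewrite /kk normr1 normr0 expr1n expr0n addr0 oner_eq0.
  by rewrite E g0; ring.
pose D := sqrtC (G ord0 ord_max ^+ 2 - G ord0 ord0 * G ord_max ord_max).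
exists ((- G ord0 ord_max + D) / G ord0 ord0), 1; split.
  rewrite /kk normr1 expr1n; apply: lt0r_neq0.
  by rewrite ltr_wpDl ?exprn_ge0 ?ltr01.
rewrite E.
have -> : G ord0 ord0 * ((- G ord0 ord_max + D) / G ord0 ord0) ^+ 2 +
  2 * G ord0 ord_max * ((- G ord0 ord_max + D) / G ord0 ord0) * 1 + G ord_max ord_max * 1 ^+ 2
  = (D ^+ 2 - (G ord0 ord_max ^+ 2 - G ord0 ord0 * G ord_max ord_max)) / G ord0 ord0.
  by field.
by rewrite /D sqrtCK subrr mul0r.
Qed.

Lemma z_bound U s0 s1 : (Gm (U *m Smx s0 s1)) ord0 ord0 = 0 ->
  kk s0 s1 ^+ 2 * (tG (Gm U) - 2 * `|\det (Gm U)|) = `|Gm (U *m Smx s0 s1) ord_max ord_max| ^+ 2.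
Proof.
move=> h0.
have Gs : Gm U ord_max ord0 = Gm U ord0 ord_max by rewrite -[in LHS](Gm_sym U) mxE.
have Vs : Gm (U *m Smx s0 s1) ord_max ord0 = Gm (U *m Smx s0 s1) ord0 ord_max
  by rewrite -[in LHS](Gm_sym (U *m Smx s0 s1)) mxE.
have ht := @tG_congr (Gm U) s0 s1 Gs; rewrite -Gm_mul in ht.
have hdet : \det (Gm (U *m Smx s0 s1)) = kk s0 s1 ^+ 2 * \det (Gm U).
  by rewrite Gm_mul !det_mulmx det_tr detS; ring.
have hn : `|\det (Gm (U *m Smx s0 s1))| = kk s0 s1 ^+ 2 * `|\det (Gm U)|.
  by rewrite hdet normrM ger0_norm // exprn_ge0 // kk_ge0.
rewrite mulrBr -ht mulrCA -hn /tG det2 h0 Vs mul0r sub0r normrN normrM -expr2 /=.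
by rewrite normr0 expr0n /= add0r addrK.
Qed.


Lemma sum3 (R : nmodType) (F : 'I_3 -> R) :
  \sum_(k < 3) F k = F (@Ordinal 3 0 isT) + F (@Ordinal 3 1 isT) + F (@Ordinal 3 2 isT).
Proof.
rewrite !big_ord_recl big_ord0 addr0 addrA; congr (F _ + F _ + F _); exact: val_inj.
Qed.

Lemma s1_00 : sigma1 C ord0 ord0 = 0. Proof. by rewrite mxE. Qed.
Lemma s1_01 : sigma1 C ord0 ord_max = 1. Proof. by rewrite mxE. Qed.
Lemma s1_10 : sigma1 C ord_max ord0 = 1. Proof. by rewrite mxE. Qed.
Lemma s1_11 : sigma1 C ord_max ord_max = 0. Proof. by rewrite mxE. Qed.
Lemma s3_00 : sigma3 C ord0 ord0 = 1. Proof. by rewrite mxE. Qed.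
Lemma s3_01 : sigma3 C ord0 ord_max = 0. Proof. by rewrite mxE. Qed.
Lemma s3_10 : sigma3 C ord_max ord0 = 0. Proof. by rewrite mxE. Qed.
Lemma s3_11 : sigma3 C ord_max ord_max = -1. Proof. by rewrite mxE. Qed.
Definition sigE := (s1_00, s1_01, s1_10, s1_11, s3_00, s3_01, s3_10, s3_11, EmE).

Lemma tensZl a (A B : 'M[C]_2) : (a *: A) *t B = a *: (A *t B).
Proof. by apply/matrixP => i j; rewrite !mxE mulrA. Qed.
Lemma tensZr a (A B : 'M[C]_2) : A *t (a *: B) = a *: (A *t B).
Proof. by apply/matrixP => i j; rewrite !mxE mulrCA. Qed.

Lemma trZ2 (rho M : 'M[C]_(2*2)) : \tr (rho *m ('i *: M)) ^+ 2 = - \tr (rho *m M) ^+ 2.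
Proof. by rewrite -scalemxAr mxtraceZ exprMn sqrCi mulN1r. Qed.
Lemma trZZ2 (rho M : 'M[C]_(2*2)) : \tr (rho *m ('i *: ('i *: M))) ^+ 2 = \tr (rho *m M) ^+ 2.
Proof. by rewrite trZ2 trZ2 opprK. Qed.

Lemma trE (rho : 'M[C]_(2*2)) (A B : 'M[C]_2) : \tr (rho *m (A *t B)) =
  \sum_(a < 2) \sum_(b < 2) \sum_(a' < 2) \sum_(b' < 2) rho (mi a b) (mi a' b') * (A a' a * B b' b).
Proof.
rewrite /mxtrace sum_tens; apply: eq_bigr => a _; apply: eq_bigr => b _.
rewrite mxE sum_tens; apply: eq_bigr => a' _; apply: eq_bigr => b' _.
by rewrite /mi tensmxE.
Qed.

Section Psi.
Variable psi : 'I_2 -> 'I_2 -> 'I_2 -> C.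

Definition UAB : 'M[C]_(2*2,2) := \matrix_(i, c) psi (idx1 i) (idx2 i) c.
Definition UAC : 'M[C]_(2*2,2) := \matrix_(i, b) psi (idx1 i) b (idx2 i).
Definition UBC : 'M[C]_(2*2,2) := \matrix_(i, a) psi a (idx1 i) (idx2 i).

Lemma idx1_mi a b : idx1 (mi a b) = a. Proof. by rewrite /idx1 /mi mxtens_indexK. Qed.
Lemma idx2_mi a b : idx2 (mi a b) = b. Proof. by rewrite /idx2 /mi mxtens_indexK. Qed.

Lemma UAB_mi a b c : UAB (mi a b) c = psi a b c. Proof. by rewrite mxE idx1_mi idx2_mi. Qed.
Lemma UAC_mi a b c : UAC (mi a c) b = psi a b c. Proof. by rewrite mxE idx1_mi idx2_mi. Qed.
Lemma UBC_mi a b c : UBC (mi b c) a = psi a b c. Proof. by rewrite mxE idx1_mi idx2_mi. Qed.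

Lemma rhoAB_U : rhoAB psi = rhoU UAB.
Proof. by apply/matrixP => i j; rewrite !mxE; apply: eq_bigr => c _; rewrite !mxE. Qed.
Lemma rhoAC_U : rhoAC psi = rhoU UAC.
Proof. by apply/matrixP => i j; rewrite !mxE; apply: eq_bigr => c _; rewrite !mxE. Qed.
Lemma rhoBC_U : rhoBC psi = rhoU UBC.
Proof. by apply/matrixP => i j; rewrite !mxE; apply: eq_bigr => c _; rewrite !mxE. Qed.

Local Notation o := ord0.
Local Notation l := ord_max.

Lemma det_AB_BC : \det (Gm UAB) = \det (Gm UBC).
Proof. by rewrite !det2 !GmE /vY !UAB_mi !UBC_mi; ring. Qed.
Lemma det_AC_BC : \det (Gm UAC) = \det (Gm UBC).
Proof. by rewrite !det2 !GmE /vY !UAC_mi !UBC_mi; ring. Qed.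

Lemma I1 : tG (Gm UAB) + tG (Gm UAC) = 4 * \det (Gram UBC).
Proof.
rewrite /tG !GmE /vY !UAB_mi !UAC_mi det2 /Gram !mxE !sum_tens !sum2 !mxE !idx1_mi !idx2_mi.
rewrite !normCK !(rmorphD, rmorphM, rmorphN) /=; ring.
Qed.


Definition Nrm : C := \sum_(a < 2) \sum_(b < 2) \sum_(c < 2) `|psi a b c| ^+ 2.

Lemma rhoAB_mi a b a' b' : rhoAB psi (mi a b) (mi a' b') =
  psi a b o * (psi a' b' o)^* + psi a b l * (psi a' b' l)^*.
Proof. by rewrite mxE sum2 !idx1_mi !idx2_mi. Qed.

Lemma S_AB : Sval (rhoAB psi) = Nrm ^+ 2 + 2 * tG (Gm UAB) - tG (Gm UAC) - tG (Gm UBC).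
Proof.
rewrite /Sval !sum3 /tcorr /pauli /= sigma2E !tensZl !tensZr ?trZZ2 !trZ2 !trE !sum2 !sigE.
rewrite !rhoAB_mi /Nrm !sum2 /tG !GmE /vY !UAB_mi !UAC_mi !UBC_mi.
rewrite !normCK !(rmorphD, rmorphM, rmorphN) /=; ring.
Qed.

Lemma rhoAC_mi a c a' c' : rhoAC psi (mi a c) (mi a' c') =
  psi a o c * (psi a' o c')^* + psi a l c * (psi a' l c')^*.
Proof. by rewrite mxE sum2 !idx1_mi !idx2_mi. Qed.

Lemma rhoBC_mi b c b' c' : rhoBC psi (mi b c) (mi b' c') =
  psi o b c * (psi o b' c')^* + psi l b c * (psi l b' c')^*.
Proof. by rewrite mxE sum2 !idx1_mi !idx2_mi. Qed.

Lemma S_AC : Sval (rhoAC psi) = Nrm ^+ 2 + 2 * tG (Gm UAC) - tG (Gm UAB) - tG (Gm UBC).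
Proof.
rewrite /Sval !sum3 /tcorr /pauli /= sigma2E !tensZl !tensZr ?trZZ2 !trZ2 !trE !sum2 !sigE.
rewrite !rhoAC_mi /Nrm !sum2 /tG !GmE /vY !UAB_mi !UAC_mi !UBC_mi.
rewrite !normCK !(rmorphD, rmorphM, rmorphN) /=; ring.
Qed.

Lemma S_BC : Sval (rhoBC psi) = Nrm ^+ 2 + 2 * tG (Gm UBC) - tG (Gm UAB) - tG (Gm UAC).
Proof.
rewrite /Sval !sum3 /tcorr /pauli /= sigma2E !tensZl !tensZr ?trZZ2 !trZ2 !trE !sum2 !sigE.
rewrite !rhoBC_mi /Nrm !sum2 /tG !GmE /vY !UAB_mi !UAC_mi !UBC_mi.
rewrite !normCK !(rmorphD, rmorphM, rmorphN) /=; ring.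
Qed.

Lemma tr_Gram_BC : \tr (Gram UBC) = Nrm.
Proof.
rewrite /mxtrace sum2 !Gram_diag !sum_tens /Nrm !sum2 !mxE !idx1_mi !idx2_mi.
by rewrite !addrA.
Qed.

End Psi.
End Conc.


Section Fin.
Variable C : numClosedFieldType.

Lemma real_sqr_ge0 (w : C) : w \is Num.real -> 0 <= w ^+ 2.
Proof. by move=> hw; rewrite -real_normK // exprn_ge0. Qed.

Lemma bound_xyz (psi : 'I_2 -> 'I_2 -> 'I_2 -> C) : Nrm psi = 1 ->
  concurrence (rhoAB psi) ^+ 2 + concurrence (rhoAC psi) ^+ 2
  + concurrence (rhoBC psi) ^+ 2 <= 4%:R / 3%:R.
Proof.
move=> hN.
rewrite (rhoAB_U psi) (rhoAC_U psi) (rhoBC_U psi).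
move: (conc_rhoU (UAB psi)) (conc_rhoU (UAC psi)) (conc_rhoU (UBC psi)).
generalize (concurrence (rhoU (UAB psi))) (concurrence (rhoU (UAC psi)))
  (concurrence (rhoU (UBC psi))) => cx cy cz -> -> ->.
rewrite (det_AB_BC psi) (det_AC_BC psi).
pose G := Gm (UBC psi).
have Gs : G ord_max ord0 = G ord0 ord_max by rewrite /G -[in LHS](Gm_sym (UBC psi)) mxE.
have [s0 [s1 [k0 h0]]] := exists_iso Gs.
pose V := UBC psi *m Smx s0 s1.
have h0' : Gm V ord0 ord0 = 0 by rewrite /V Gm_mul.
have hz := z_bound h0'.
have hI1 := I1 psi.
have hdet := det_Gram_mul (UBC psi) s0 s1.
have hle := det_Gram_le V.
have htr := tr_Gram_mul (UBC psi) s0 s1.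
rewrite tr_Gram_BC hN mulr1 /mxtrace sum2 -/V in htr.
pose P := Gram V ord0 ord0; pose Q := Gram V ord_max ord_max.
pose k := kk s0 s1.
have P0 : 0 <= P := Gram_diag_ge0 V ord0.
have Q0 : 0 <= Q := Gram_diag_ge0 V ord_max.
have kp : 0 < k by rewrite lt_def k0 kk_ge0.
have hQ : `|Gm V ord_max ord_max| ^+ 2 <= Q ^+ 2.
  by rewrite ler_pXn2r // ?nnegrE // Gm_vY_bound.
pose dl := `|\det (Gm (UBC psi))|.
have dl0 : 0 <= dl by exact: normr_ge0.
rewrite -(ler_pM2l (exprn_gt0 2 kp)).
apply: (le_trans (y := 4 * (P * Q) + Q ^+ 2)).
  have -> : k ^+ 2 * (tG (Gm (UAB psi)) - 2 * dl + (tG (Gm (UAC psi)) - 2 * dl)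
            + (tG (Gm (UBC psi)) - 2 * dl))
      = 4 * \det (Gram V) - 4 * (k ^+ 2 * dl) + `|Gm V ord_max ord_max| ^+ 2.
    transitivity (k ^+ 2 * (tG (Gm (UAB psi)) + tG (Gm (UAC psi))) - 4 * (k ^+ 2 * dl)
                  + k ^+ 2 * (tG (Gm (UBC psi)) - 2 * dl)); first by ring.
    by rewrite hI1 hz /V hdet /k; ring.
  rewrite -addrA [X in _ <= X]addrC [X in X <= _]addrC lerD //.
  - rewrite addrC lerBlDr; apply: le_trans hQ _; rewrite lerDl.
    by apply: mulr_ge0; [rewrite ler0n | rewrite mulr_ge0 ?exprn_ge0 // ltW].
  - by rewrite ler_pM2l ?ltr0n.
have hP : P = k - Q by rewrite /k -htr addrK.
rewrite -subr_ge0.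
have -> : k ^+ 2 * (4%:R / 3%:R) - (4 * (P * Q) + Q ^+ 2) = 3%:R * (Q - 2%:R / 3%:R * k) ^+ 2.
  by rewrite hP; field; rewrite ?pnatr_eq0.
apply: mulr_ge0; first by rewrite ler0n.
apply: real_sqr_ge0; apply: realB; first exact: ger0_real.
by apply: ger0_real; rewrite mulr_ge0 ?divr_ge0 ?ler0n // ltW.
Qed.

End Fin.

Section Fin2.
Variable C : numClosedFieldType.

Lemma S_rel (psi : 'I_2 -> 'I_2 -> 'I_2 -> C) : Nrm psi = 1 ->
  [/\ Sval (rhoAB psi) - 1 = 2 * concurrence (rhoAB psi) ^+ 2 - concurrence (rhoAC psi) ^+ 2 - concurrence (rhoBC psi) ^+ 2,
      Sval (rhoAC psi) - 1 = 2 * concurrence (rhoAC psi) ^+ 2 - concurrence (rhoAB psi) ^+ 2 - concurrence (rhoBC psi) ^+ 2 &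
      Sval (rhoBC psi) - 1 = 2 * concurrence (rhoBC psi) ^+ 2 - concurrence (rhoAB psi) ^+ 2 - concurrence (rhoAC psi) ^+ 2].
Proof.
move=> hN; rewrite (S_AB psi) (S_AC psi) (S_BC psi) hN expr1n.
rewrite (rhoAB_U psi) (rhoAC_U psi) (rhoBC_U psi).
move: (conc_rhoU (UAB psi)) (conc_rhoU (UAC psi)) (conc_rhoU (UBC psi)).
generalize (concurrence (rhoU (UAB psi))) (concurrence (rhoU (UAC psi)))
  (concurrence (rhoU (UBC psi))) => cx cy cz -> -> ->.
rewrite (det_AB_BC psi) (det_AC_BC psi).
by split; ring.
Qed.

Lemma L3 (u v w : C) : 8%:R / 9%:R <= u + v -> u + v < 2 * w -> u + v + w <= 4%:R / 3%:R -> False.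
Proof.
move=> h1 h2 h3.
have h4 : 3 * (u + v) < 2 * (u + v + w).
  by rewrite -subr_gt0 (_ : _ - _ = 2 * w - (u + v)) ?subr_gt0 //; ring.
have h5 : 3 * (8%:R / 9%:R) <= 3 * (u + v) by rewrite ler_pM2l ?ltr0n.
have h6 : 2 * (u + v + w) <= 2 * (4%:R / 3%:R) by rewrite ler_pM2l ?ltr0n.
have := lt_le_trans (le_lt_trans h5 h4) h6.
have -> : 3 * (8%:R / 9%:R) = 2 * (4%:R / 3%:R) :> C by field; rewrite ?pnatr_eq0.
by rewrite ltxx.
Qed.

Lemma final_logic (x y z sab sac sbc : C) :
  sab - 1 = 2 * x - y - z -> sac - 1 = 2 * y - x - z -> sbc - 1 = 2 * z - x - y ->
  x + y + z <= 4%:R / 3%:R ->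
  let cA := 8%:R / 9%:R <= x + y in
  let cB := 8%:R / 9%:R <= x + z in
  let cC := 8%:R / 9%:R <= y + z in
  (cA /\ cB) \/ (cA /\ cC) \/ (cB /\ cC) ->
  ~ (1 < sab /\ 1 < sac) /\ ~ (1 < sab /\ 1 < sbc) /\ ~ (1 < sac /\ 1 < sbc).
Proof.
move=> e1 e2 e3 hb cA cB cC hc.
have Sab : 1 < sab -> y + z < 2 * x.
  by rewrite -subr_gt0 e1 (_ : _ - _ - _ = 2 * x - (y + z)) ?subr_gt0 //; ring.
have Sac : 1 < sac -> x + z < 2 * y.
  by rewrite -subr_gt0 e2 (_ : _ - _ - _ = 2 * y - (x + z)) ?subr_gt0 //; ring.
have Sbc : 1 < sbc -> x + y < 2 * z.
  by rewrite -subr_gt0 e3 (_ : _ - _ - _ = 2 * z - (x + y)) ?subr_gt0 //; ring.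
have bA : cA -> ~ 1 < sbc.
  by move=> h /Sbc h'; exact: (@L3 x y z h h' hb).
have bB : cB -> ~ 1 < sac.
  move=> h /Sac h'; apply: (@L3 x z y h h'); by rewrite (_ : x + z + y = x + y + z) //; ring.
have bC : cC -> ~ 1 < sab.
  move=> h /Sab h'; apply: (@L3 y z x h h'); by rewrite (_ : y + z + x = x + y + z) //; ring.
case: hc => [[a b]|[[a c]|[b c]]]; split; try split; move=> [h1 h2];
  solve [ exact: bA a h2 | exact: bA a h1 | exact: bB b h2 | exact: bB b h1
        | exact: bC c h1 | exact: bC c h2 ].
Qed.

End Fin2.

Unset Implicit Arguments.
Unset Strict Implicit.

Theorem corollary4 (R : realType) (psi : 'I_2 -> 'I_2 -> 'I_2 -> R[i]) :
  normalized psi ->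
  let CAB := concurrence (rhoAB psi) in
  let CAC := concurrence (rhoAC psi) in
  let CBC := concurrence (rhoBC psi) in
  (* condition C_ik^2 + C_jk^2 >= 8/9 for k = A, B, C *)
  let condA := 8%:R / 9%:R <= CAB ^+ 2 + CAC ^+ 2 in
  let condB := 8%:R / 9%:R <= CAB ^+ 2 + CBC ^+ 2 in
  let condC := 8%:R / 9%:R <= CAC ^+ 2 + CBC ^+ 2 in
  (condA /\ condB) \/ (condA /\ condC) \/ (condB /\ condC) ->
  let SAB := Sval (rhoAB psi) in
  let SAC := Sval (rhoAC psi) in
  let SBC := Sval (rhoBC psi) in
  ~ (1 < SAB /\ 1 < SAC) /\ ~ (1 < SAB /\ 1 < SBC) /\ ~ (1 < SAC /\ 1 < SBC).
Proof.
move=> hN.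
have hN' : Nrm psi = 1 := hN.
have [e1 e2 e3] := @S_rel _ psi hN'.
exact: (@final_logic _ _ _ _ _ _ _ e1 e2 e3 (@bound_xyz _ psi hN')).
Qed.
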